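(* Let $(k_n)_{n\geq1}$ be scalars and let $\kappa$ be the infinitesimal character of the gap-insertion Hopf algebra $\mathbf{H}$ of noncrossing partitions with $\kappa(J_n)=k_n$ for $n\geq1$, where $J_n=\{\{1\},\dots,\{n\}\}$, and $\kappa(P)=0$ for every other noncrossing partition. Let $K$ be the character of $\mathbf{B}$ with $K(P)=\kappa(P)$ for all nonempty noncrossing partitions $P$, and $\mathcal{E}_\prec(\kappa)$ the unique $\phi\in\mathbf H^*$ with $\phi=\varepsilon+\kappa\prec\phi$. Then for every noncrossing partition $P$ of $[n]$ with $k$ blocks, $$\mathcal{E}_\prec(\kappa)(P)=(\psi_\prec\curvearrowleft K)(P)=\sum_{Q\geq P}K(P/Q)=\begin{cases}0&\text{if }k<n,\\ \displaystyle\sum_{Q\in\operatorname{NCP}(n)}\prod_{\pi\in Q}k_{\sharp\pi}&\text{if }k=n,\end{cases}$$ where $\psi_\prec$ is the unique element of $\mathbf H^*$ with $\psi_\prec=\varepsilon+e\prec\psi_\prec$ and the middle sum runs over noncrossing partitions $Q$ of $[n]$ coarser than $P$.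
   Context: $\operatorname{NCP}(n)$: noncrossing partitions of $[n]$ (no $a<c<b<d$ with $a,b$ in one block and $c,d$ in another); partitions of finite linearly ordered sets are identified with partitions of $[n]$ via the order-preserving bijection; $P_{|X}$ induced partition; $\sharp\pi$ block size. $\operatorname{Conv}(X)=\{\min X,\dots,\max X\}$; on blocks $\pi\to\rho$ iff $\operatorname{Conv}(\pi)\cap\rho\neq\emptyset$ (transitively closed). Upperset $U$: ($\pi\in U,\pi\to\rho$)$\Rightarrow\rho\in U$; lowerset $L$: ($\pi\in L,\sigma\to\pi$)$\Rightarrow\sigma\in L$. Cut $(L,U)$: lowerset $L$ and complement $U$; $L$ identified with the restriction of $P$ to the union of its blocks, elements $x_1<\dots<x_k$; $D_0=\{y<x_1\}$, $D_i=\{x_i<y<x_{i+1}\}$, $D_k=\{y>x_k\}$, $U_i=P_{|D_i}$, $\overline U$ ordered product of nonempty $U_i$. $\mathbf H$: free associative unital algebra on nonempty noncrossing partitions; basis of multipartitions (viewed as partitions of $[n_1+\dots+n_r]$ by shifting); cuts of multipartitions are tuples of cuts, $L=L_1\cdots L_r$, $\overline U=\overline{U_1}\cdots\overline{U_r}$. Counit $\varepsilon$. $\Delta_\prec(P)=\sum_{\text{cuts},1\in L}L\otimes\overline U$; $(f\prec g)(\mathbf1)=0$, $(f\prec g)(x)=(f\otimes g)\Delta_\prec(x)$ on nonempty multipartitions. Infinitesimal characters: linear forms vanishing on $\mathbf1$ and on products of two nonempty monomials. $e$: infinitesimal character with $e(P)=1$ for one-block noncrossing $P$ and $0$ on other noncrossing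 partitions. $\mathbf B$: free commutative unital algebra on nonempty noncrossing partitions; characters are unital algebra maps to $\mathbb K$. For noncrossing $P\leq Q$ (refinement), $Q=\{\tau_1,\dots,\tau_l\}$, $P/Q=P_{|\tau_1}\cdots P_{|\tau_l}$. Coaction $\rho(P)=\sum_{Q\geq P\text{ noncrossing}}Q\otimes P/Q$ (algebra morphism $\mathbf H\to\mathbf H\otimes\mathbf B$); $\alpha\curvearrowleft\phi=(\alpha\otimes\phi)\circ\rho$. *)

(* Defs.v *)
From HB Require Import structures.
From mathcomp Require Import all_boot all_algebra.
Set Implicit Arguments. Unset Strict Implicit. Unset Printing Implicit Defensive.
Import GRing.Theory.

(* A (possibly empty) partition-candidate of [n] = 'I_n (0-based: 'I_n stands
   for {1,...,n} via i |-> i+1, order preserved).  Generators of H are the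
   nonempty noncrossing partitions, packaged with their size. *)
Definition ncp := {n : nat & {set {set 'I_n}}}.
Definition mkncp n (P : {set {set 'I_n}}) : ncp := existT _ n P.

Definition noncrossing n (P : {set {set 'I_n}}) : bool :=
  [forall B in P, forall C in P, (B != C) ==>
     [forall a in B, forall b in B, forall c in C, forall d in C,
        ~~ [&& (a < c)%N, (c < b)%N & (b < d)%N]]].

Definition isNCP n (P : {set {set 'I_n}}) : bool :=
  partition P [set: 'I_n] && noncrossing P.

Definition ncp_ok (p : ncp) : bool := (0 < tag p)%N && isNCP (tagged p).

(* multipartitions = words of generators (basis of H) *)
Definition validw (w : seq ncp) : bool := all ncp_ok w.

(* induced partition P_{|X}, transported to [#|X|] by the order-preserving
   bijection enum_val : 'I_#|X| -> X *)
Definition restrict n (P : {set {set 'I_n}}) (X : {set 'I_n})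
  : {set {set 'I_#|X|}} :=
  [set [set j : 'I_#|X| | enum_val j \in B] | B : {set 'I_n} in P] :\ set0.
Definition restr n (P : {set {set 'I_n}}) (X : {set 'I_n}) : ncp :=
  mkncp (restrict P X).

Definition conv n (X : {set 'I_n}) : {set 'I_n} :=
  [set i : 'I_n | [exists a in X, exists b in X, (a <= i)%N && (i <= b)%N]].
Definition arrow0 n (P : {set {set 'I_n}}) : rel {set 'I_n} :=
  fun pi rho => [&& pi \in P, rho \in P & ~~ [disjoint conv pi & rho]].
Definition arrow n (P : {set {set 'I_n}}) : rel {set 'I_n} :=
  connect (arrow0 P).
Definition lowerset n (P L : {set {set 'I_n}}) : bool :=
  (L \subset P) &&
  [forall pi in L, forall sigma in P, arrow P sigma pi ==> (sigma \in L)].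

Definition gap n (S : {set 'I_n}) (i : nat) : {set 'I_n} :=
  [set y : 'I_n | (y \notin S) && (#|[set x in S | (x < y)%N]| == i)].

Definition ubar n (P L : {set {set 'I_n}}) : seq ncp :=
  [seq restr P (gap (cover L) i) |
     i <- [seq i <- iota 0 #|cover L|.+1 | gap (cover L) i != set0]].
(* L as an element of H (empty partition = unit = empty word) *)
Definition lword n (P L : {set {set 'I_n}}) : seq ncp :=
  if L == set0 then [::] else [:: restr P (cover L)].
Definition first_in n (L : {set {set 'I_n}}) : bool :=
  [exists i in cover L, val i == 0%N].

Definition cuts (p : ncp) : seq (bool * seq ncp * seq ncp) :=
  let: existT n P := p in
  [seq (first_in L, lword P L, ubar P L) |
     L <- [seq L <- enum (powerset P) | lowerset P L]].

Definition combine (c : seq ncp * seq ncp) (d : seq ncp * seq ncp) :=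
  (c.1 ++ d.1, c.2 ++ d.2).

Definition allcuts (w : seq ncp) : seq (seq ncp * seq ncp) :=
  foldr (fun p acc => [seq combine (c.1.2, c.2) d | c <- cuts p, d <- acc])
        [:: ([::], [::])] w.

(* cuts entering Delta_prec: tuples of cuts with 1 in L (1 = first element
   of the first factor) *)
Definition mcuts (w : seq ncp) : seq (seq ncp * seq ncp) :=
  match w with
  | [::] => [::]
  | p :: w' => [seq combine (c.1.2, c.2) d |
                  c <- [seq c <- cuts p | c.1.1], d <- allcuts w']
  end.

Section Funct.
Variable R : comNzRingType.

(* elements of H^* are given by their values on the basis of multipartitions *)
Definition hshuffle (f g : seq ncp -> R) (w : seq ncp) : R :=
  (\sum_(c <- mcuts w) f c.1 * g c.2)%R.

Definition eps (w : seq ncp) : R := ((w == [::]) %:R)%R.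

Definition is_exp (f phi : seq ncp -> R) : Prop :=
  forall w, validw w -> phi w = (eps w + hshuffle f phi w)%R.

Definition Jn n : {set {set 'I_n}} := [set [set i] | i : 'I_n].

Definition kappa (k : nat -> R) (w : seq ncp) : R :=
  match w with
  | [:: p] => let: existT n P := p in if P == Jn n then k n else 0%R
  | _ => 0%R
  end.

Definition einf (w : seq ncp) : R :=
  match w with
  | [:: p] => let: existT n P := p in ((#|P| == 1%N)%:R)%R
  | _ => 0%R
  end.

(* the character K of B: values on generators *)
Definition Kchar (k : nat -> R) (p : ncp) : R := kappa k [:: p].

Definition toH n (P : {set {set 'I_n}}) : seq ncp :=
  if n == 0%N then [::] else [:: mkncp P].

Definition refines n (P Q : {set {set 'I_n}}) : bool :=
  [forall B in P, [exists C in Q, B \subset C]].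

(* (alpha <~ K)(P) = (alpha (x) K) rho(P),
   rho(P) = sum_{Q >= P noncrossing} Q (x) P/Q,  K(P/Q) = prod_tau K(P_|tau) *)
Definition coact (alpha : seq ncp -> R) (K : ncp -> R) n
  (P : {set {set 'I_n}}) : R :=
  (\sum_(Q : {set {set 'I_n}} | isNCP Q && refines P Q)
     alpha (toH Q) * \prod_(tau in Q) K (restr P tau))%R.

End Funct.

(* Main.v *)
Require Import Defs.
From HB Require Import structures.
From mathcomp Require Import all_boot all_algebra.
Set Implicit Arguments. Unset Strict Implicit. Unset Printing Implicit Defensive.

Section Ord.
Variable n : nat.
Implicit Types (X S A B C : {set 'I_n}) (P Q L : {set {set 'I_n}}).

Lemma ev_lt X (i j : 'I_#|X|) : (i < j)%N -> (enum_val i < enum_val j)%N.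
Proof.
move=> ij.
have x0 : 'I_n by case: (enum_val i) => m /ltn_predK <-; exact: ord0.
have so : sorted (relpre val ltn) (enum X).
  rewrite /enum_mem -enumT; apply: sorted_filter; first by move=> a b c /=; apply: ltn_trans.
  by rewrite -sorted_map val_enum_ord iota_ltn_sorted.
rewrite !(enum_val_nth x0).
apply: (sorted_ltn_nth (leT := relpre val ltn)) => //; first by move=> a b c /=; apply: ltn_trans.
  by rewrite inE /= -cardE.
by rewrite inE /= -cardE.
Qed.

Lemma ev_ltE X (i j : 'I_#|X|) : (enum_val i < enum_val j)%N = (i < j)%N.
Proof.
apply/idP/idP; last exact: ev_lt.
move=> h; rewrite ltnNge; apply/negP; rewrite leq_eqVlt => /orP [/eqP e|].
  by have /ord_inj e' := e; move: h; rewrite e' ltnn.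
by move/ev_lt; rewrite ltnNge => /negP; apply; apply: ltnW.
Qed.
End Ord.

Section Ord2.
Variable n : nat.
Implicit Types (X S A B C : {set 'I_n}) (P Q L : {set {set 'I_n}}).

Lemma ncI P : (forall B C a b c d, B \in P -> C \in P -> B != C -> a \in B -> b \in B ->
   c \in C -> d \in C -> (a < c)%N -> (c < b)%N -> (b < d)%N -> False) -> noncrossing P.
Proof.
move=> H; apply/forallP => B; apply/implyP => BP; apply/forallP => C; apply/implyP => CP.
apply/implyP => BC.
apply/forallP => a; apply/implyP => aB; apply/forallP => b; apply/implyP => bB.
apply/forallP => c; apply/implyP => cC; apply/forallP => d; apply/implyP => dC.
apply/negP => /and3P [h1 h2 h3]; exact: (H B C a b c d).
Qed.

Lemma ncE P B C a b c d : noncrossing P -> B \in P -> C \in P -> B != C -> a \in B -> b \in B ->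
   c \in C -> d \in C -> (a < c)%N -> (c < b)%N -> (b < d)%N -> False.
Proof.
move=> /forallP /(_ B) /implyP /(_ _) H BP CP BC aB bB cC dC h1 h2 h3.
move: (H BP) => /forallP /(_ C) /implyP /(_ CP) /implyP /(_ BC).
move=> /forallP /(_ a) /implyP /(_ aB) /forallP /(_ b) /implyP /(_ bB).
move=> /forallP /(_ c) /implyP /(_ cC) /forallP /(_ d) /implyP /(_ dC).
by rewrite h1 h2 h3.
Qed.

Definition cnt S (y : 'I_n) := #|[set x in S | (x < y)%N]|.

Lemma gapE S i y : (y \in gap S i) = (y \notin S) && (cnt S y == i).
Proof. by rewrite inE. Qed.

Lemma cnt_mono S (y y' : 'I_n) : (y <= y')%N -> (cnt S y <= cnt S y')%N.
Proof.
move=> h; apply: subset_leq_card; apply/subsetP => x; rewrite !inE => /andP [-> /= xy].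
exact: leq_trans xy h.
Qed.

Lemma cnt_le S y : (cnt S y <= #|S|)%N.
Proof. by apply: subset_leq_card; apply/subsetP => x; rewrite inE => /andP []. Qed.

Lemma cnt_lt S (y y' x : 'I_n) : x \in S -> (y <= x)%N -> (x < y')%N -> (cnt S y < cnt S y')%N.
Proof.
move=> xS h1 h2; apply: proper_card; apply/properP; split.
  apply/subsetP => u; rewrite !inE => /andP [-> /=] h; apply: leq_trans h _.
  exact: ltnW (leq_ltn_trans h1 h2).
by exists x; rewrite !inE ?xS //= -leqNgt.
Qed.

Lemma GO S i j y y' : y \in gap S i -> y' \in gap S j -> (i < j)%N -> (y < y')%N.
Proof.
rewrite !gapE => /andP [_ /eqP <-] /andP [_ /eqP <-] h.
rewrite ltnNge; apply/negP => /(cnt_mono S); by rewrite leqNgt h.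
Qed.

Lemma GB S i y y' x : y \in gap S i -> y' \in gap S i -> x \in S -> (y < x)%N -> (x < y')%N -> False.
Proof.
move=> h1 h2 xS l1 l2; have := cnt_lt xS (ltnW l1) l2.
by move: h1 h2; rewrite !gapE => /andP [_ /eqP ->] /andP [_ /eqP ->]; rewrite ltnn.
Qed.

Lemma GS S i j y y' : y \in gap S i -> y' \in gap S j -> (i < j)%N ->
  exists2 x, x \in S & (y < x)%N && (x < y').
Proof.
move=> h1 h2 ij.
have : ~~ ([set x in S | (x < y')%N] \subset [set x in S | (x < y)%N]).
  apply/negP => /subset_leq_card; move: h1 h2; rewrite !gapE => /andP [_ /eqP e1] /andP [_ /eqP e2].
  by rewrite /cnt in e1 e2; rewrite e1 e2 leqNgt ij.
case/subsetPn => x; rewrite !inE => /andP [xS xy'] /nandP [/negP //|]; rewrite -leqNgt => yx.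
exists x => //; rewrite xy' andbT ltn_neqAle yx andbT.
apply/negP => /eqP e; move: h1; rewrite gapE; have -> : y = x by apply: ord_inj.
by rewrite xS.
Qed.

Lemma GC S y : y \notin S -> y \in gap S (cnt S y).
Proof. by move=> h; rewrite gapE h eqxx. Qed.

Lemma gap_disj S i j y : y \in gap S i -> y \in gap S j -> i = j.
Proof. by rewrite !gapE => /andP [_ /eqP <-] /andP [_ /eqP <-]. Qed.

Lemma gapNS S i y : y \in gap S i -> y \notin S.
Proof. by rewrite gapE => /andP []. Qed.

End Ord2.

Lemma djU (T : finType) (A B : {set T}) x : [disjoint A & B] -> x \in A -> x \in B -> False.
Proof. by move=> d xA; rewrite (disjointFr d xA). Qed.

Lemma djI (T : finType) (A B : {set T}) : (forall x, x \in A -> x \in B -> False) -> [disjoint A & B].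
Proof. by move=> H; rewrite disjoints_subset; apply/subsetP => x xA; rewrite inE; apply/negP; apply: H. Qed.

Lemma set1_card (T : finType) (A : {set T}) (i : T) : i \in A -> (#|A| <= 1)%N -> A = [set i].
Proof.
move=> iA h; have : #|A| == 1 by rewrite eqn_leq h card_gt0; apply/set0Pn; exists i.
by case/cards1P => x Ax; move: iA; rewrite Ax inE => /eqP ->.
Qed.

Lemma R3 m (Q : {set {set 'I_m}}) : partition Q [set: 'I_m] ->
  (Q == Jn m) = [forall C in Q, #|C| <= 1]%N.
Proof.
case/and3P => /eqP cQ tQ nQ; apply/eqP/forall_inP.
  by move=> -> C /imsetP [i _ ->]; rewrite cards1.
move=> H; apply/setP => C; apply/idP/imsetP.
  move=> CQ; have : C != set0 by apply: contraNneq nQ => <-.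
  case/set0Pn => x xC; exists x => //; exact: set1_card (H _ CQ).
case=> i _ ->.
have iC : i \in cover Q by rewrite cQ inE.
have pQ := pblock_mem iC; rewrite -(set1_card _ (H _ pQ)) // mem_pblock //.
Qed.

Section Restr.
Variable n : nat.
Implicit Types (X S B C D : {set 'I_n}) (P Q L : {set {set 'I_n}}).

Definition pre X B : {set 'I_#|X|} := [set j : 'I_#|X| | enum_val j \in B].

Lemma restrictE P X : restrict P X = [set pre X B | B in P] :\ set0.
Proof. by []. Qed.

Lemma ev_pre X B : [set enum_val j | j in pre X B] = B :&: X.
Proof.
apply/setP => x; apply/imsetP/idP.
  by case=> j; rewrite inE => jB ->; rewrite inE jB enum_valP.
rewrite inE => /andP [xB xX]; exists (enum_rank_in xX x); last by rewrite enum_rankK_in.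
by rewrite inE enum_rankK_in.
Qed.

Lemma pre_card X B : #|pre X B| = #|B :&: X|.
Proof. by rewrite -ev_pre card_imset //; apply: enum_val_inj. Qed.

Lemma mem_restrict P X A : A \in restrict P X -> A != set0 /\ exists2 B, B \in P & A = pre X B.
Proof. by rewrite restrictE in_setD1 => /andP [h /imsetP [B BP eA]]; split => //; exists B. Qed.

Lemma pre_restrict P X B : B \in P -> pre X B != set0 -> pre X B \in restrict P X.
Proof. by move=> BP h; rewrite restrictE in_setD1 h imset_f. Qed.

Lemma restrict_part P D X : partition P D -> X \subset D -> partition (restrict P X) [set: 'I_#|X|].
Proof.
case/and3P => /eqP cP tP nP XD; apply/and3P; split.
- apply/eqP/setP => j; rewrite inE; apply/bigcupP.
  have : enum_val j \in cover P by rewrite cP (subsetP XD) // enum_valP.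
  case/bigcupP => B BP jB; exists (pre X B) => //; last by rewrite inE.
  by apply: pre_restrict => //; apply/set0Pn; exists j; rewrite inE.
- apply/trivIsetP => A A' /mem_restrict [_ [B BP ->]] /mem_restrict [_ [B' BP' ->]] ne.
  have BB : B != B' by apply: contraNneq ne => ->.
  have dj := (trivIsetP tP) _ _ BP BP' BB.
  by apply: djI => j; rewrite !inE => h1 h2; apply: (djU dj h1 h2).
- by rewrite restrictE setD11.
Qed.

Lemma restrict_nc P D X : partition P D -> noncrossing P -> noncrossing (restrict P X).
Proof.
move=> _ ncP; apply: ncI => A A' a b c d /mem_restrict [_ [B BP ->]] /mem_restrict [_ [B' BP' ->]] ne.
have BB : B != B' by apply: contraNneq ne => ->.
rewrite !inE => aB bB cB dB h1 h2 h3.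
by apply: (ncE ncP BP BP' BB aB bB cB dB); rewrite ev_ltE.
Qed.

Lemma restrict_NCP P D X : partition P D -> noncrossing P -> X \subset D -> isNCP (restrict P X).
Proof. by move=> pP nP XD; rewrite /isNCP (restrict_part pP XD) (restrict_nc X pP nP). Qed.

Lemma restrictJ P D X : partition P D -> X \subset D ->
  (restrict P X == Jn #|X|) = [forall B in P, #|B :&: X| <= 1]%N.
Proof.
move=> pP XD; rewrite R3 ?(restrict_part pP XD) //; apply/forall_inP/forall_inP.
  move=> H B BP; rewrite -pre_card; case: (eqVneq (pre X B) set0) => [->|ne]; first by rewrite cards0.
  exact: H (pre_restrict BP ne).
by move=> H A /mem_restrict [_ [B BP ->]]; rewrite pre_card; apply: H.
Qed.

Lemma restrict_cover P D L : partition P D -> L \subset P ->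
  restrict P (cover L) = [set pre (cover L) B | B in L].
Proof.
case/and3P => /eqP cP tP nP LP; apply/setP => A; apply/idP/imsetP.
  case/mem_restrict => ne [B BP eA]; exists B => //.
  move: ne; rewrite eA -card_gt0 pre_card card_gt0 => /set0Pn [x].
  rewrite inE => /andP [xB /bigcupP [B' B'L xB']].
  suff -> : B = B' by [].
  by rewrite -(def_pblock tP BP xB) (def_pblock tP (subsetP LP _ B'L) xB').
case=> B BL ->; apply: pre_restrict; first exact: subsetP LP _ BL.
rewrite -card_gt0 pre_card card_gt0.
have : B != set0 by apply: contraNneq nP => <-; apply: (subsetP LP).
case/set0Pn => x xB; apply/set0Pn; exists x; rewrite inE xB; apply/bigcupP; by exists B.
Qed.

Lemma pre_inj_cover L : {in L &, injective (pre (cover L))}.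
Proof.
move=> B B' BL B'L e.
have sub : forall B, B \in L -> B :&: cover L = B.
  by move=> E EL; apply/setIidPl/subsetP => x xE; apply/bigcupP; exists E.
by rewrite -(sub _ BL) -(sub _ B'L) -!ev_pre e.
Qed.

Lemma restrict_cover_card P D L : partition P D -> L \subset P ->
  #|restrict P (cover L)| = #|L|.
Proof.
by move=> pP LP; rewrite (restrict_cover pP LP) (card_in_imset (@pre_inj_cover L)).
Qed.

End Restr.

Lemma connect_in (T : finType) (e : rel T) y : (forall x, e x y -> x = y) ->
  forall x, connect e x y -> x = y.
Proof.
move=> H x /connectP [p]; elim: p x => [|x1 p IH] x /=; first by move=> _ ->.
by case/andP => exx1 pth ly; have e1 := IH _ pth ly; subst x1; apply: H.
Qed.

Section Low.
Variable n : nat.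
Implicit Types (X S B C D : {set 'I_n}) (P Q L : {set {set 'I_n}}).

Lemma convI B a b (x : 'I_n) : a \in B -> b \in B -> (a <= x)%N -> (x <= b)%N -> x \in conv B.
Proof.
move=> aB bB h1 h2; rewrite inE; apply/existsP; exists a; rewrite aB /=.
by apply/existsP; exists b; rewrite bB h1 h2.
Qed.

Lemma convE B (x : 'I_n) : x \in conv B -> exists a, exists b, [/\ a \in B, b \in B, (a <= x)%N & (x <= b)%N].
Proof.
rewrite inE => /existsP [a /andP [aB /existsP [b /andP [bB /andP [h1 h2]]]]].
by exists a, b.
Qed.

Lemma lowersetE P L : lowerset P L -> L \subset P /\
  (forall pi sigma, pi \in L -> sigma \in P -> arrow P sigma pi -> sigma \in L).
Proof.
case/andP => LP /forall_inP H; split => // pi sigma piL sP ar.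
by move: (H pi piL) => /forall_inP /(_ sigma sP) /implyP; apply.
Qed.

Lemma lowersetI P L : L \subset P ->
  (forall pi sigma, pi \in L -> sigma \in P -> arrow P sigma pi -> sigma \in L) -> lowerset P L.
Proof.
move=> LP H; rewrite /lowerset LP /=; apply/forall_inP => pi piL.
by apply/forall_inP => s sP; apply/implyP; apply: H.
Qed.

Lemma L0 P (z : 'I_n) : partition P [set: 'I_n] -> noncrossing P -> val z = 0 ->
  lowerset P [set pblock P z].
Proof.
case/and3P => /eqP cP tP nP ncP z0.
have zc : z \in cover P by rewrite cP inE.
have B0P := pblock_mem zc.
apply: lowersetI; first by rewrite sub1set.
move=> pi s; rewrite inE => /eqP -> sP ar; rewrite inE; apply/eqP.
apply: (connect_in _ ar) => x /and3P [xP _ /negP ndj].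
case: (eqVneq x (pblock P z)) => // ne; exfalso; apply: ndj; apply: djI => u /convE [a [b [aB bB h1 h2]]] uB0.
have aNB0 : a \notin pblock P z.
  apply/negP => aB0; apply: (negP ne); apply/eqP.
  by rewrite -(def_pblock tP xP aB) (def_pblock tP B0P aB0).
have bNB0 : b \notin pblock P z.
  apply/negP => bB0; apply: (negP ne); apply/eqP.
  by rewrite -(def_pblock tP xP bB) (def_pblock tP B0P bB0).
have au : (a < u)%N by rewrite ltn_neqAle h1 andbT; apply/negP => /eqP /ord_inj e; subst u; rewrite uB0 in aNB0.
have ub : (u < b)%N by rewrite ltn_neqAle h2 andbT; apply/negP => /eqP /ord_inj e; subst u; rewrite uB0 in bNB0.
have za : (z < a)%N.
  rewrite z0 lt0n; apply/negP => /eqP a0.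
  have e : a = z by apply: ord_inj; rewrite z0.
  by subst a; rewrite mem_pblock zc in aNB0.
have ne' : pblock P z != x by rewrite eq_sym.
apply: (ncE ncP B0P xP ne' _ uB0 aB bB za au ub); by rewrite mem_pblock.
Qed.

Lemma L1 P L B : partition P [set: 'I_n] -> lowerset P L -> B \in P -> B \notin L ->
  exists2 i, (i <= #|cover L|)%N & B \subset gap (cover L) i.
Proof.
case/and3P => /eqP cP tP nP /lowersetE [LP low] BP BL.
have dj : forall x, x \in B -> x \notin cover L.
  move=> x xB; apply/negP => /bigcupP [pi piL xpi]; apply: (negP BL).
  by rewrite -(def_pblock tP BP xB) (def_pblock tP (subsetP LP _ piL) xpi).
have : B != set0 by apply: contraNneq nP => <-.
case/set0Pn => y yB; exists (cnt (cover L) y); first exact: cnt_le.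
apply/subsetP => y' y'B.
have g' := GC (dj _ y'B); have g := GC (dj _ yB).
case: (ltngtP (cnt (cover L) y) (cnt (cover L) y')) => h; last by rewrite h.
- case: (GS g g' h) => x xS /andP [h1 h2]; exfalso.
  case/bigcupP: xS => pi piL xpi; apply: (negP BL); apply: (low pi B piL BP).
  apply: connect1; rewrite /arrow0 BP (subsetP LP _ piL) /=.
  apply/negP => d; apply: (djU d _ xpi); exact: convI yB y'B (ltnW h1) (ltnW h2).
- case: (GS g' g h) => x xS /andP [h1 h2]; exfalso.
  case/bigcupP: xS => pi piL xpi; apply: (negP BL); apply: (low pi B piL BP).
  apply: connect1; rewrite /arrow0 BP (subsetP LP _ piL) /=.
  apply/negP => d; apply: (djU d _ xpi); exact: convI y'B yB (ltnW h1) (ltnW h2).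
Qed.

Lemma LJ L : L \subset Jn n -> lowerset (Jn n) L.
Proof.
move=> LJ; apply: lowersetI => // pi s piL sP ar.
suff -> : s = pi by [].
apply: (connect_in _ ar) => x /and3P [/imsetP [a _ ->] /imsetP [b _ ->] /negP ndj].
apply/eqP; rewrite eqEsubset; apply/andP; split; apply/subsetP => u; rewrite !inE => /eqP ->;
 apply/negPn/negP => ab; apply: ndj; apply: djI => v /convE [a1 [b1 [a1B b1B h1 h2]]];
 move: a1B b1B; rewrite !inE => /eqP e1 /eqP e2; subst a1 b1;
 have e : v = a by apply: ord_inj; apply/eqP; rewrite eqn_leq h1 h2.
 by subst v => /eqP e'; move: ab; rewrite e' eqxx.
 by subst v => /eqP e'; move: ab; rewrite e' eqxx.
Qed.

End Low.

Import GRing.Theory.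

Section Glue.
Variable n : nat.
Implicit Types (X S A B C D : {set 'I_n}) (P Q L : {set {set 'I_n}}).

Definition ncpart X Q := partition Q X && noncrossing Q.
Definition subQ Q A := [set C in Q | C \subset A].
Definition noX C1 C2 := forall a b c d : 'I_n, a \in C1 -> b \in C1 -> c \in C2 -> d \in C2 ->
  (a < c)%N -> (c < b)%N -> (b < d)%N -> False.

Lemma partS Q D C : partition Q D -> C \in Q -> C \subset D.
Proof. by case/and3P => /eqP <- _ _ CQ; apply/subsetP => x xC; apply/bigcupP; exists C. Qed.

Lemma partN0 Q D C : partition Q D -> C \in Q -> C != set0.
Proof. by case/and3P => _ _ nQ CQ; apply: contraNneq nQ => <-. Qed.

Lemma partT Q D : partition Q D -> trivIset Q.
Proof. by case/and3P. Qed.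

Lemma partC Q D : partition Q D -> cover Q = D.
Proof. by case/and3P => /eqP. Qed.

Lemma sepX C1 C2 : (forall x y, x \in C1 -> y \in C2 -> (x < y)%N) -> noX C1 C2 /\ noX C2 C1.
Proof.
move=> H; split => a b c d aC bC cC dC h1 h2 h3.
  by have := H _ _ bC cC; rewrite ltnNge (ltnW h2).
by have := H _ _ cC aC; rewrite ltnNge (ltnW h1).
Qed.

Lemma ncpU A B Q1 Q2 : ncpart A Q1 -> ncpart B Q2 -> [disjoint A & B] ->
  (forall C1 C2, C1 \in Q1 -> C2 \in Q2 -> noX C1 C2 /\ noX C2 C1) ->
  ncpart (A :|: B) (Q1 :|: Q2).
Proof.
case/andP => p1 n1 /andP [p2 n2] dAB X12; apply/andP; split.
  apply/and3P; split.
  - by rewrite /cover bigcup_setU -/(cover Q1) -/(cover Q2) (partC p1) (partC p2).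
  - apply/trivIsetP => C C'; rewrite !inE => /orP [h|h] /orP [h'|h'] ne.
    + exact: (trivIsetP (partT p1)).
    + by apply: djI => x xC xC'; apply: (djU dAB (subsetP (partS p1 h) _ xC) (subsetP (partS p2 h') _ xC')).
    + by apply: djI => x xC xC'; apply: (djU dAB (subsetP (partS p1 h') _ xC') (subsetP (partS p2 h) _ xC)).
    + exact: (trivIsetP (partT p2)).
  - rewrite !inE negb_or; case/and3P: p1 => _ _ ->; by case/and3P: p2 => _ _ ->.
apply: ncI => C C' a b c d; rewrite !inE => /orP [h|h] /orP [h'|h'] ne.
- exact: ncE n1 h h' ne.
- by case: (X12 _ _ h h') => H _; apply: H.
- by case: (X12 _ _ h' h) => _ H; apply: H.
- exact: ncE n2 h h' ne.
Qed.

Lemma ncpS D Q A : ncpart D Q -> (forall C, C \in Q -> C \subset A \/ [disjoint C & A]) ->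
  A \subset D -> ncpart A (subQ Q A).
Proof.
case/andP => pQ nQ H AD; apply/andP; split.
  apply/and3P; split.
  - apply/eqP/setP => x; apply/bigcupP/idP.
      by case=> C; rewrite inE => /andP [_ CA] xC; apply: (subsetP CA).
    move=> xA; have : x \in cover Q by rewrite (partC pQ) (subsetP AD).
    case/bigcupP => C CQ xC; exists C => //; rewrite inE CQ /=.
    by case: (H C CQ) => // dj; exfalso; apply: djU dj xC xA.
  - by apply: trivIsetS (partT pQ); apply/subsetP => C; rewrite inE => /andP [].
  - by rewrite inE negb_and; case/and3P: pQ => _ _ ->.
by apply: ncI => C C' a b c d; rewrite !inE => /andP [h _] /andP [h' _]; apply: ncE nQ h h'.
Qed.

Lemma ncp1 S : S != set0 -> ncpart S [set S].
Proof.
move=> ne; apply/andP; split; first by rewrite /partition cover1 eqxx trivIset1 inE eq_sym ne.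
by apply: ncI => C C' a b c d; rewrite !inE => /eqP -> /eqP ->; rewrite eqxx.
Qed.

End Glue.

Section Mom.
Variable R : comNzRingType.
Variable k : nat -> R.
Local Open Scope ring_scope.

Definition W n (Q : {set {set 'I_n}}) : R := \prod_(pi in Q) k #|pi|.
Definition mX n (X : {set 'I_n}) : R := \sum_(Q | ncpart X Q) W Q.
Definition mom m : R := \sum_(Q : {set {set 'I_m}} | isNCP Q) W Q.

Lemma sum_split (I : finType) (p p1 p2 : pred I) (u : I -> I -> I) (s1 s2 : I -> I) (F : I -> R) :
  (forall Q, p Q -> [/\ p1 (s1 Q), p2 (s2 Q) & u (s1 Q) (s2 Q) = Q]) ->
  (forall Q1 Q2, p1 Q1 -> p2 Q2 ->
     [/\ p (u Q1 Q2), s1 (u Q1 Q2) = Q1, s2 (u Q1 Q2) = Q2 & F (u Q1 Q2) = F Q1 * F Q2]) ->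
  \sum_(Q | p Q) F Q = (\sum_(Q1 | p1 Q1) F Q1) * (\sum_(Q2 | p2 Q2) F Q2).
Proof.
move=> H1 H2; rewrite big_distrlr pair_big /=.
rewrite (reindex_onto (fun pr : I * I => u pr.1 pr.2) (fun Q => (s1 Q, s2 Q))); last first.
  by move=> Q /H1 [].
apply: eq_big => [[Q1 Q2]|[Q1 Q2]] /=.
  apply/idP/idP.
    case/andP => pu /eqP [e1 e2]; case: (H1 _ pu) => a b _.
    by move: a b; rewrite e1 e2 => -> ->.
  by case/andP => a b; case: (H2 _ _ a b) => -> -> -> _; rewrite eqxx.
case/andP => pu /eqP [e1 e2]; case: (H1 _ pu) => a b _.
by rewrite e1 in a; rewrite e2 in b; case: (H2 _ _ a b).
Qed.

Lemma W_U n (Q1 Q2 : {set {set 'I_n}}) : [disjoint Q1 & Q2] -> W (Q1 :|: Q2) = W Q1 * W Q2.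
Proof.
move=> d; rewrite /W (eq_bigl [predU Q1 & Q2]) ?bigU // => C; by rewrite !inE.
Qed.

End Mom.

Section Transport.
Variable n : nat.
Variable X : {set 'I_n}.

Definition gX (C : {set 'I_#|X|}) : {set 'I_n} := [set enum_val j | j in C].
Definition expand (Q : {set {set 'I_#|X|}}) : {set {set 'I_n}} := [set gX C | C in Q].

Lemma gX_inj : injective gX.
Proof. exact/imset_inj/enum_val_inj. Qed.

Lemma pre_gX C : pre X (gX C) = C.
Proof. by apply/setP => j; rewrite inE mem_imset //; apply: enum_val_inj. Qed.

Lemma gX_pre B : gX (pre X B) = B :&: X.
Proof. exact: ev_pre. Qed.

Lemma restrict_expand (Q : {set {set 'I_#|X|}}) : set0 \notin Q -> restrict (expand Q) X = Q.
Proof.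
move=> nQ; apply/setP => C; apply/idP/idP.
  by case/mem_restrict => _ [B /imsetP [C' C'Q ->] ->]; rewrite pre_gX.
move=> CQ; have ne : C != set0 by apply: contraNneq nQ => <-.
by rewrite -(pre_gX C); apply: pre_restrict; [apply: imset_f | rewrite pre_gX].
Qed.

Lemma expand_restrict (Q : {set {set 'I_n}}) : partition Q X -> expand (restrict Q X) = Q.
Proof.
move=> pQ; apply/setP => B; apply/imsetP/idP.
  case=> C /mem_restrict [_ [B' B'Q ->]] ->; rewrite gX_pre.
  by rewrite (setIidPl (partS pQ B'Q)).
move=> BQ; exists (pre X B); last by rewrite gX_pre (setIidPl (partS pQ BQ)).
apply: pre_restrict => //; rewrite -card_gt0 pre_card (setIidPl (partS pQ BQ)) card_gt0.
exact: partN0 pQ BQ.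
Qed.

Lemma expand_ncp (Q : {set {set 'I_#|X|}}) : isNCP Q -> ncpart X (expand Q).
Proof.
case/andP => /and3P [/eqP cQ tQ nQ] ncQ; apply/andP; split.
  apply/and3P; split.
  - apply/eqP/setP => x; apply/bigcupP/idP.
      by case=> B /imsetP [C _ ->] /imsetP [j _ ->]; apply: enum_valP.
    move=> xX; have : enum_rank_in xX x \in cover Q by rewrite cQ inE.
    case/bigcupP => C CQ jC; exists (gX C); first exact: imset_f.
    by rewrite -(enum_rankK_in xX xX); apply: imset_f.
  - apply/trivIsetP => B B' /imsetP [C CQ ->] /imsetP [C' C'Q ->] ne.
    have ne' : C != C' by apply: contraNneq ne => ->.
    have dj := (trivIsetP tQ) _ _ CQ C'Q ne'.
    apply: djI => x /imsetP [j jC ->] /imsetP [j' j'C' e].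
    by have e' := enum_val_inj e; subst j'; apply: djU dj jC j'C'.
  - apply/imsetP => [[C CQ e]]; move/eqP: e; rewrite eq_sym imset_eq0 => /eqP e.
    by subst C; rewrite CQ in nQ.
apply: ncI => B B' a b c d /imsetP [C CQ ->] /imsetP [C' C'Q ->] ne.
have ne' : C != C' by apply: contraNneq ne => ->.
move=> /imsetP [a' aC ->] /imsetP [b' bC ->] /imsetP [c' cC ->] /imsetP [d' dC ->].
rewrite !ev_ltE => h1 h2 h3; exact: ncE ncQ CQ C'Q ne' aC bC cC dC h1 h2 h3.
Qed.

End Transport.

Section MomT.
Variable R : comNzRingType.
Variable k : nat -> R.
Local Open Scope ring_scope.

Lemma mX_mom n (X : {set 'I_n}) : mX k X = mom k #|X|.
Proof.
rewrite /mX /mom (reindex_onto (@expand n X) (fun Q => restrict Q X)); last first.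
  by move=> Q /andP [pQ _]; apply: expand_restrict.
apply: eq_big => Q.
  apply/idP/idP.
    case/andP => h /eqP e; rewrite -e.
    by case/andP: h => pQ nQ; apply: restrict_NCP pQ nQ (subxx _).
  move=> h; rewrite expand_ncp //= restrict_expand //.
  by case/andP: h => /and3P [].
move=> _; rewrite /W /expand big_imset /=; last by move=> C C' _ _; apply: gX_inj.
by apply: eq_bigr => C _; rewrite card_imset //; apply: enum_val_inj.
Qed.

End MomT.

Lemma ne_dj (T : finType) (C A B : {set T}) : C != set0 -> C \subset A -> C \subset B -> [disjoint A & B] -> False.
Proof. by case/set0Pn => x xC CA CB d; apply: (djU d (subsetP CA _ xC) (subsetP CB _ xC)). Qed.

Section Gaps.
Variable n : nat.
Implicit Types (X S A B C D : {set 'I_n}) (P Q L : {set {set 'I_n}}).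

Definition Ub S m := [set y | (y \notin S) && (cnt S y < m)%N].
Definition gp S m Q := [forall C in Q, has (fun i => C \subset gap S i) (iota 0 m)].

Lemma gpE S m Q C : gp S m Q -> C \in Q -> exists2 i, (i < m)%N & C \subset gap S i.
Proof.
move=> /forall_inP H /H /hasP [i]; rewrite mem_iota /= add0n => h1 h2; by exists i.
Qed.

Lemma gpI S m Q : (forall C, C \in Q -> exists2 i, (i < m)%N & C \subset gap S i) -> gp S m Q.
Proof.
move=> H; apply/forall_inP => C /H [i h1 h2]; apply/hasP; exists i => //.
by rewrite mem_iota /= add0n.
Qed.

Lemma gap_Ub S i m : (i < m)%N -> gap S i \subset Ub S m.
Proof. by move=> h; apply/subsetP => y; rewrite gapE inE => /andP [-> /eqP ->]. Qed.

Lemma dj_gap_Ub S m : [disjoint gap S m & Ub S m].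
Proof. by apply: djI => y; rewrite gapE inE => /andP [_ /eqP ->] /andP [_]; rewrite ltnn. Qed.

Lemma UbS S m : Ub S m.+1 = Ub S m :|: gap S m.
Proof.
apply/setP => y; rewrite !inE ltnS leq_eqVlt.
by case: (y \in S) => //=; rewrite orbC.
Qed.

Lemma Ub0 S : Ub S 0 = set0.
Proof. by apply/setP => y; rewrite !inE ltn0 andbF. Qed.

Lemma UbT S : Ub S #|S|.+1 = ~: S.
Proof. by apply/setP => y; rewrite !inE ltnS cnt_le andbT. Qed.

Lemma gap_same S i j C : C != set0 -> C \subset gap S i -> C \subset gap S j -> i = j.
Proof. by case/set0Pn => x xC h1 h2; apply: (gap_disj (subsetP h1 _ xC) (subsetP h2 _ xC)). Qed.

End Gaps.

Section Rec.
Variable R : comNzRingType.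
Variable k : nat -> R.
Local Open Scope ring_scope.

Lemma Gl n (S : {set 'I_n}) m :
  \sum_(Q | ncpart (Ub S m) Q && gp S m Q) W k Q = \prod_(i < m) mX k (gap S i).
Proof.
elim: m => [|m IH].
  rewrite big_ord0 (eq_bigl (fun Q => Q == set0)) ?big_pred1_eq /W ?big_set0 // => Q.
  rewrite Ub0; apply/idP/idP.
    case/andP => /andP [pQ _] _; apply/eqP/setP => C; rewrite inE; apply/negbTE/negP => CQ.
    by apply: ne_dj (partN0 pQ CQ) (partS pQ CQ) (subxx _) _; rewrite disjoints_subset sub0set.
  move/eqP => ->; apply/andP; split; last by apply/forall_inP => C; rewrite inE.
  apply/andP; split; last by apply: ncI => C; rewrite inE.
  by rewrite partition_set0.
rewrite big_ord_recr /= -IH [mX k (gap S m)]/mX.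
apply: (@sum_split R _ (fun Q => ncpart (Ub S m.+1) Q && gp S m.+1 Q) (fun Q => ncpart (Ub S m) Q && gp S m Q) (fun Q => ncpart (gap S m) Q) (@setU _) (fun Q => subQ Q (Ub S m)) (fun Q => subQ Q (gap S m)) (@W R k n)).
  move=> Q /andP [nQ gQ]; have pQ : partition Q (Ub S m.+1) by case/andP: nQ.
  split.
  - apply/andP; split.
      apply: ncpS nQ _ _; last by rewrite UbS subsetUl.
      move=> C CQ; case: (gpE gQ CQ) => i; rewrite ltnS leq_eqVlt => /orP [/eqP ->|lt] sC.
        by right; apply: djI => x /(subsetP sC) xg xU; apply: djU (dj_gap_Ub S m) xg xU.
      by left; apply: subset_trans sC (gap_Ub _ lt).
    apply: gpI => C; rewrite inE => /andP [CQ CU]; case: (gpE gQ CQ) => i.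
    rewrite ltnS leq_eqVlt => /orP [/eqP e|lt] sC; last by exists i.
    by subst i; exfalso; apply: ne_dj (partN0 pQ CQ) sC CU (dj_gap_Ub S m).
  - apply: ncpS nQ _ _; last by rewrite UbS subsetUr.
    move=> C CQ; case: (gpE gQ CQ) => i _ sC; case: (eqVneq i m) => [<-|ne]; first by left.
    right; apply: djI => x /(subsetP sC) h1 h2; apply: (negP ne); apply/eqP; exact: gap_disj h1 h2.
  - apply/setP => C; rewrite !inE -andb_orr; case CQ: (C \in Q) => //=.
    case: (gpE gQ CQ) => i; rewrite ltnS leq_eqVlt => /orP [/eqP ->|lt] sC.
      by rewrite sC orbT.
    by rewrite (subset_trans sC (gap_Ub _ lt)).
move=> Q1 Q2 /andP [n1 g1] n2; have p1 : partition Q1 (Ub S m) by case/andP: n1.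
have p2 : partition Q2 (gap S m) by case/andP: n2.
have dQ : [disjoint Q1 & Q2].
  apply: djI => C C1 C2; apply: ne_dj (partN0 p1 C1) (partS p2 C2) (partS p1 C1) (dj_gap_Ub S m).
split.
- apply/andP; split.
    rewrite UbS; apply: ncpU n1 n2 _ _; first by rewrite disjoint_sym dj_gap_Ub.
    move=> C1 C2 C1Q C2Q; apply: sepX => x y xC yC; case: (gpE g1 C1Q) => i lt sC.
    exact: GO (subsetP sC _ xC) (subsetP (partS p2 C2Q) _ yC) lt.
  apply: gpI => C; rewrite inE => /orP [CQ|CQ].
    by case: (gpE g1 CQ) => i lt sC; exists i => //; apply: ltnW.
  by exists m => //; apply: partS p2 CQ.
- apply/setP => C; rewrite !inE; apply/idP/idP; last by move=> CQ; rewrite CQ (partS p1 CQ).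
  case/andP => /orP [//|CQ] CU; exfalso.
  by apply: ne_dj (partN0 p2 CQ) (partS p2 CQ) CU (dj_gap_Ub S m).
- apply/setP => C; rewrite !inE; apply/idP/idP; last by move=> CQ; rewrite CQ orbT (partS p2 CQ).
  case/andP => /orP [CQ|//] CU; exfalso.
  by apply: ne_dj (partN0 p1 CQ) CU (partS p1 CQ) (dj_gap_Ub S m).
- exact: W_U.
Qed.

Lemma Rrec n (z : 'I_n) : val z = 0%N ->
  mX k [set: 'I_n] = \sum_(S : {set 'I_n} | z \in S) k #|S| * \prod_(i < #|S|.+1) mX k (gap S i).
Proof.
move=> z0; rewrite /mX (partition_big (fun Q => pblock Q z) (fun S => z \in S)); last first.
  by move=> Q /andP [pQ _]; rewrite mem_pblock (partC pQ) inE.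
apply: eq_bigr => S zS.
have GG := Gl S #|S|.+1; rewrite UbT in GG; rewrite -GG.
have -> : k #|S| = \sum_(Q1 | Q1 == [set S]) W k Q1 by rewrite big_pred1_eq /W big_set1.
have SN : S != set0 by apply/set0Pn; exists z.
have SnC : ~~ (S \subset ~: S) by apply/negP => /subsetP /(_ _ zS); rewrite inE zS.
have djS : [disjoint S & ~: S] by apply: djI => x; rewrite inE => ->.
apply: (@sum_split R _ (fun Q => ncpart [set: 'I_n] Q && (pblock Q z == S)) (fun Q => Q == [set S]) (fun Q => ncpart (~: S) Q && gp S #|S|.+1 Q) (@setU _) (fun Q => subQ Q S) (fun Q => subQ Q (~: S)) (@W R k n)).
  move=> Q /andP [nQ /eqP eS]; have pQ : partition Q [set: 'I_n] by case/andP: nQ.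
  have zc : z \in cover Q by rewrite (partC pQ) inE.
  have SQ : S \in Q by rewrite -eS pblock_mem.
  have alt : forall C, C \in Q -> C = S \/ C \subset ~: S.
    move=> C CQ; case: (eqVneq C S) => [->|ne]; first by left.
    by right; rewrite -disjoints_subset; apply: (trivIsetP (partT pQ)).
  split.
  - apply/eqP/setP => C; rewrite !inE; apply/idP/idP; last by move/eqP ->; rewrite SQ subxx.
    case/andP => CQ CS; case: (alt C CQ) => [->//|CN]; exfalso.
    exact: ne_dj (partN0 pQ CQ) CS CN djS.
  - apply/andP; split.
      apply: ncpS nQ _ (subsetT _) => C CQ; case: (alt C CQ) => [->|]; last by left.
      by right; rewrite disjoint_sym; apply: djI => x; rewrite inE => /negP; apply.
    apply: gpI => C; rewrite inE => /andP [CQ CN].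
    have CnS : S != C by apply/eqP => e; move: SnC; rewrite {1}e CN.
    case/set0Pn: (partN0 pQ CQ) => y yC; exists (cnt S y); first by rewrite ltnS cnt_le.
    apply/subsetP => y' y'C.
    have ny : forall u, u \in C -> u \notin S by move=> u /(subsetP CN); rewrite inE.
    have zl : forall u, u \in C -> (z < u)%N.
      move=> u uC; rewrite z0 lt0n; apply/negP => /eqP u0.
      have e : u = z by apply: ord_inj; rewrite z0.
      by subst u; move: (ny _ uC); rewrite zS.
    have g := GC (ny _ yC); have g' := GC (ny _ y'C).
    case: (ltngtP (cnt S y) (cnt S y')) => h; last by rewrite h.
      case: (GS g g' h) => x xS /andP [h1 h2]; exfalso.
      exact: ncE (proj2 (andP nQ)) SQ CQ CnS zS xS yC y'C (zl _ yC) h1 h2.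
    case: (GS g' g h) => x xS /andP [h1 h2]; exfalso.
    exact: ncE (proj2 (andP nQ)) SQ CQ CnS zS xS y'C yC (zl _ y'C) h1 h2.
  - apply/setP => C; rewrite !inE -andb_orr; case CQ: (C \in Q) => //=.
    by case: (alt C CQ) => [->|->]; rewrite ?subxx ?orbT.
move=> Q1 Q2 /eqP -> /andP [n2 g2]; have p2 : partition Q2 (~: S) by case/andP: n2.
have SQ2 : S \notin Q2 by apply/negP => /(partS p2); apply/negP.
have nU : ncpart [set: 'I_n] ([set S] :|: Q2).
  rewrite -(setUCr S); apply: ncpU (ncp1 SN) n2 djS _.
  move=> C1 C2; rewrite inE => /eqP -> C2Q; case: (gpE g2 C2Q) => i _ sC; split.
    move=> a b c d aS bS cC dC h1 h2 h3.
    exact: GB (subsetP sC _ cC) (subsetP sC _ dC) bS h2 h3.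
  move=> a b c d aC bC cS dS h1 h2 h3.
  exact: GB (subsetP sC _ aC) (subsetP sC _ bC) cS h1 h2.
split.
- rewrite nU /=; apply/eqP; apply: def_pblock zS; first by case/andP: nU => /partT.
  by rewrite !inE eqxx.
- apply/setP => C; rewrite !inE; apply/idP/idP; last by move/eqP ->; rewrite eqxx subxx.
  case/andP => /orP [//|CQ] CS; exfalso.
  exact: ne_dj (partN0 p2 CQ) CS (partS p2 CQ) djS.
- apply/setP => C; rewrite !inE; apply/idP/idP; last by move=> CQ; rewrite CQ orbT (partS p2 CQ).
  case/andP => /orP [/eqP e|//] CS; exfalso; subst C; by rewrite CS in SnC.
- by apply: W_U; rewrite disjoints1.
Qed.

End Rec.

Definition u0 (p : ncp) : seq ncp := let: existT n P := p in ubar P set0.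
Definition u0s (w : seq ncp) : seq ncp := flatten (map u0 w).
Definition lows n (P : {set {set 'I_n}}) := [seq L <- enum (powerset P) | lowerset P L].
Definition sz (w : seq ncp) : nat := sumn (map (fun p => tag p) w).

Lemma cover0 n : cover (set0 : {set {set 'I_n}}) = set0.
Proof. by rewrite /cover big_set0. Qed.

Lemma lowerset0 n (P : {set {set 'I_n}}) : lowerset P set0.
Proof. by apply: lowersetI; [apply: sub0set | move=> pi s; rewrite inE]. Qed.

Lemma first_in_E n (L : {set {set 'I_n}}) (z : 'I_n) : val z = 0%N -> first_in L = (z \in cover L).
Proof.
move=> z0; apply/existsP/idP.
  by case=> i /andP [ic /eqP i0]; have -> : z = i by apply: ord_inj; rewrite z0 i0.
by move=> zc; exists z; rewrite zc z0 eqxx.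
Qed.

Lemma first_in_N0 n (L : {set {set 'I_n}}) : first_in L -> L != set0.
Proof. by case/existsP => i /andP [ic _]; apply: contraTneq ic => ->; rewrite cover0 inE. Qed.

Section Cuts.
Variable R : comNzRingType.
Local Open Scope ring_scope.

Lemma lowsE n (P : {set {set 'I_n}}) (Q : pred {set {set 'I_n}}) (F : {set {set 'I_n}} -> R) :
  \sum_(L <- lows P | Q L) F L = \sum_(L in powerset P | lowerset P L && Q L) F L.
Proof. by rewrite /lows big_filter_cond big_enum_cond. Qed.

Lemma C0 n (P : {set {set 'I_n}}) (H : seq ncp -> R) :
  \sum_(c <- cuts (mkncp P) | c.1.2 == [::]) H c.2 = H (u0 (mkncp P)).
Proof.
rewrite /cuts /= big_map -/(lows P) lowsE /=.
rewrite (eq_bigl (fun L => L == set0)) ?big_pred1_eq //; move=> L /=.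
rewrite /lword; case: (eqVneq L set0) => [->|ne] /=; last by rewrite andbA andbF.
by rewrite powersetE sub0set lowerset0.
Qed.

Lemma A0 (w : seq ncp) : forall (G : seq ncp -> R),
  \sum_(d <- allcuts w | d.1 == [::]) G d.2 = G (u0s w).
Proof.
elim: w => [|p w IH] G; first by rewrite /= big_cons big_nil /= addr0.
rewrite /= big_mkcond big_allpairs_dep /=.
rewrite (eq_bigr (fun c : bool * seq ncp * seq ncp => if c.1.2 == [::] then
     \sum_(d <- allcuts w | d.1 == [::]) G (c.2 ++ d.2) else 0)); last first.
  move=> c _; case: (eqVneq c.1.2 [::]) => [->|ne] /=; first by rewrite [RHS]big_mkcond.
  by rewrite big1 // => d _; case: c.1.2 ne.
rewrite -big_mkcond /=.
rewrite (eq_bigr (fun c : bool * seq ncp * seq ncp => G (c.2 ++ u0s w))); last first.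
  by move=> c _; rewrite (IH (fun s => G (c.2 ++ s))).
case: p => n P; exact: (C0 P (fun s => G (s ++ u0s w))).
Qed.

Lemma HS (f g : seq ncp -> R) n (P : {set {set 'I_n}}) w :
  (forall s, size s != 1%N -> f s = 0) ->
  hshuffle f g (mkncp P :: w) =
  \sum_(L <- lows P | first_in L) f [:: restr P (cover L)] * g (ubar P L ++ u0s w).
Proof.
move=> f0; rewrite /hshuffle /mcuts big_allpairs_dep big_filter /cuts /= big_map -/(lows P).
apply: eq_bigr => L fL /=.
have -> : lword P L = [:: restr P (cover L)] by rewrite /lword (negbTE (first_in_N0 fL)).
rewrite big_mkcond (eq_bigr (fun d : seq ncp * seq ncp => if d.1 == [::] then
   f [:: restr P (cover L)] * g (ubar P L ++ d.2) else 0)); last first.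
  move=> d _; case: (eqVneq d.1 [::]) => [->//|ne].
  by rewrite f0 ?mul0r //; case: d.1 ne.
by rewrite -big_mkcond -mulr_sumr (A0 w (fun s => g (ubar P L ++ s))).
Qed.

Lemma HS0 (f g : seq ncp -> R) : hshuffle f g [::] = 0.
Proof. by rewrite /hshuffle big_nil. Qed.

End Cuts.

Lemma gap0T n : gap (set0 : {set 'I_n}) 0 = setT.
Proof.
apply/setP => y; rewrite !inE /=; apply/eqP; apply/eqP; rewrite cards_eq0; apply/eqP/setP => x.
by rewrite !inE.
Qed.

Lemma u0E n (P : {set {set 'I_n}}) : (0 < n)%N -> ubar P set0 = [:: restr P setT].
Proof.
move=> n0; rewrite /ubar cover0 cards0 /= gap0T.
have -> : (setT : {set 'I_n}) != set0 by apply/set0Pn; exists (Ordinal n0); rewrite inE.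
by rewrite /= gap0T.
Qed.

Lemma restr_ok n (P : {set {set 'I_n}}) X : isNCP P -> X != set0 -> ncp_ok (restr P X).
Proof.
case/andP => pP nP ne; rewrite /ncp_ok /= card_gt0 ne /=.
exact: restrict_NCP pP nP (subsetT _).
Qed.

Lemma u0s_valid w : validw w -> validw (u0s w) /\ sz (u0s w) = sz w.
Proof.
elim: w => [|[n P] w IH] //= /andP [/andP [n0 ncP] vw].
case: (IH vw) => v1 s1; rewrite /u0s /= -/(u0s w) u0E //= v1 andbT; split.
  by apply: restr_ok => //; apply/set0Pn; exists (Ordinal n0); rewrite inE.
by rewrite /sz /= -!/(sz _) s1 cardsT card_ord.
Qed.

Lemma sum_gap n (S : {set 'I_n}) : (\sum_(i <- iota 0 #|S|.+1) #|gap S i| = #|~: S|)%N.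
Proof.
transitivity (\sum_(i <- iota 0 #|S|.+1) \sum_(y : 'I_n) ((y \in gap S i) : nat))%N.
  apply: eq_bigr => i _; rewrite -sum1_card big_mkcond /=.
  by apply: eq_bigr => y _; case: (y \in _).
rewrite exchange_big /=.
rewrite [RHS](_ : _ = \sum_(y : 'I_n) ((y \in ~: S) : nat))%N; last first.
  by rewrite -sum1_card big_mkcond; apply: eq_bigr => y _; case: (_ \in _).
apply: eq_bigr => y _.
rewrite inE; case yS: (y \in S) => /=.
  by rewrite big1_seq // => i _; rewrite gapE yS.
rewrite (eq_bigr (fun i => if cnt S y == i then 1 else 0)%N); last by move=> i _; rewrite gapE yS.
rewrite -big_mkcond sum1_count.
have -> : count (fun i => cnt S y == i) (iota 0 #|S|.+1) = count_mem (cnt S y) (iota 0 #|S|.+1).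
  by apply: eq_count => i; rewrite eq_sym.
by rewrite count_uniq_mem ?iota_uniq // mem_iota /= add0n ltnS cnt_le.
Qed.

Lemma ubar_valid n (P : {set {set 'I_n}}) L : isNCP P ->
  validw (ubar P L) /\ sz (ubar P L) = #|~: cover L|.
Proof.
move=> ncP; split.
  by apply/allP => q /mapP [i]; rewrite mem_filter => /andP [ne _] ->; apply: restr_ok.
rewrite /sz /ubar -map_comp sumnE big_map big_filter -sum_gap.
rewrite [RHS](bigID (fun i => gap (cover L) i != set0)) [X in _ = _ + X]big1 ?addn0 // => i.
by rewrite negbK => /eqP ->; rewrite cards0.
Qed.

Lemma set_I0 (A : {set 'I_0}) : A = set0.
Proof. by apply/setP => [[i hi]]. Qed.

Lemma sz_cat a b : sz (a ++ b) = (sz a + sz b)%N.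
Proof. by rewrite /sz map_cat sumn_cat. Qed.

Lemma cardC_lt n (S : {set 'I_n}) z : z \in S -> (#|~: S| < n)%N.
Proof.
move=> zS; have := cardsC S; rewrite card_ord => e.
by rewrite -[X in (_ < X)%N]e -{1}(add0n #|~: S|) ltn_add2r card_gt0; apply/set0Pn; exists z.
Qed.

Section Exps.
Variable R : comNzRingType.
Variable k : nat -> R.
Local Open Scope ring_scope.

Definition Mv (p : ncp) : R := let: existT n P := p in if P == Jn n then mom k n else 0.
Definition phi0 (w : seq ncp) : R := \prod_(p <- w) Mv p.

Lemma mom0 : mom k 0 = 1.
Proof.
rewrite /mom (eq_bigl (fun Q => Q == set0)) ?big_pred1_eq /W ?big_set0 //.
move=> Q; apply/idP/idP.
  case/andP => /and3P [_ _ nQ] _; apply/eqP/setP => C; rewrite inE.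
  by apply/negbTE; apply: contra nQ; rewrite (set_I0 C).
move/eqP => ->; rewrite /isNCP; apply/andP; split; last by apply: ncI => C; rewrite inE.
by rewrite /partition /cover big_set0 (set_I0 setT) eqxx inE andbT; apply/trivIsetP => C; rewrite inE.
Qed.

Lemma Mv_restrT n (P : {set {set 'I_n}}) : isNCP P -> Mv (restr P setT) = Mv (mkncp P).
Proof.
case/andP => pP _; rewrite /Mv /= (restrictJ pP (subxx _)) (R3 pP) cardsT card_ord.
by congr (if _ then _ else _); apply: eq_forallb => B; rewrite setIT.
Qed.

Lemma phi0_u0s w : validw w -> phi0 (u0s w) = phi0 w.
Proof.
elim: w => [|[n P] w IH] //= /andP [/andP [n0 ncP] vw].
rewrite /u0s /= -/(u0s w) u0E // /phi0 /= !big_cons -/(phi0 _) -/(phi0 w) IH //.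
by rewrite Mv_restrT.
Qed.

Lemma einf0 (s : seq ncp) : size s != 1%N -> @einf R s = 0.
Proof. by case: s => [|a [|b s]]. Qed.

Lemma kappa0 (s : seq ncp) : size s != 1%N -> kappa k s = 0.
Proof. by case: s => [|a [|b s]]. Qed.

Lemma PSI n (P : {set {set 'I_n}}) : (0 < n)%N -> isNCP P ->
  \sum_(L <- lows P | first_in L) @einf R [:: restr P (cover L)] = 1.
Proof.
move=> n0 /andP [pP ncP]; set z := Ordinal n0.
have zc : z \in cover P by rewrite (partC pP) inE.
set B0 := pblock P z.
have B0P : B0 \in P by apply: pblock_mem.
rewrite lowsE (bigD1 [set B0]) /=; last first.
  rewrite powersetE sub1set B0P (L0 pP ncP) //= (first_in_E _ (erefl : val z = 0%N)).
  by rewrite cover1 mem_pblock.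
rewrite (restrict_cover_card pP); last by rewrite sub1set.
rewrite cards1 eqxx big1 ?addr0 // => L /andP [/andP [LP /andP [_ fL]] ne].
rewrite (restrict_cover_card pP) -?powersetE //.
case: (boolP (#|L| == 1%N)) => // /cards1P [B eL]; exfalso; apply: (negP ne).
move: fL; rewrite (first_in_E _ (erefl : val z = 0%N)) eL cover1 => zB.
rewrite /B0; apply/eqP; congr [set _]; apply/esym; apply: def_pblock (partT pP) _ zB.
by move: LP; rewrite powersetE eL sub1set.
Qed.

Lemma prod_gaps n (S : {set 'I_n}) :
  \prod_(i <- [seq i <- iota 0 #|S|.+1 | gap S i != set0]) mom k #|gap S i|
  = \prod_(i < #|S|.+1) mX k (gap S i).
Proof.
rewrite big_filter big_mkcond.
have -> : iota 0 #|S|.+1 = index_iota 0 #|S|.+1 by rewrite /index_iota subn0.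
rewrite big_mkord; apply: eq_bigr => i _; rewrite mX_mom.
by case: (eqVneq (gap S i) set0) => [->|//]; rewrite cards0 mom0.
Qed.

Lemma STAR n (P : {set {set 'I_n}}) : (0 < n)%N -> isNCP P ->
  Mv (mkncp P) = \sum_(L <- lows P | first_in L) kappa k [:: restr P (cover L)] * phi0 (ubar P L).
Proof.
move=> n0 ncP0; have /andP [pP ncP] := ncP0; set z := Ordinal n0.
have z0 : val z = 0%N by [].
rewrite /Mv /= (R3 pP).
case: (boolP [forall C in P, #|C| <= 1]%N) => [allS|].
  have /eqP eP : P == Jn n by rewrite (R3 pP).
  subst P.
  rewrite /mom -/(mX k [set: 'I_n]) (Rrec k z0) lowsE.
  rewrite (reindex_onto (fun S : {set 'I_n} => [set [set i] | i in S]) (fun L => cover L)); last first.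
    move=> L /andP [LP _]; move: LP; rewrite powersetE => LP.
    apply/setP => C; apply/imsetP/idP.
      case=> i /bigcupP [B BL iB] ->.
      have /imsetP [j _ eB] := subsetP LP _ BL.
      by move: iB; rewrite eB inE => /eqP ->; rewrite -eB.
    move=> CL; have /imsetP [j _ eC] := subsetP LP _ CL.
    by exists j => //; apply/bigcupP; exists C => //; rewrite eC inE.
  have covS : forall S : {set 'I_n}, cover [set [set i] | i in S] = S.
    move=> S; apply/setP => x; apply/bigcupP/idP.
      by case=> B /imsetP [i iS ->]; rewrite inE => /eqP ->.
    by move=> xS; exists [set x]; [apply: imset_f | rewrite inE].
  apply: eq_big => S.
    rewrite covS eqxx andbT (first_in_E _ z0) covS powersetE.
    have sub : [set [set i] | i in S] \subset Jn n by apply/subsetP => C /imsetP [i _ ->]; apply: imset_f.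
    by rewrite sub LJ.
  move=> _; rewrite covS /=.
  rewrite (restrictJ pP (subsetT _)).
  have allJ : forall X : {set 'I_n}, [forall B in Jn n, #|B :&: X| <= 1]%N.
    move=> X; apply/forall_inP => B /imsetP [i _ ->].
    by apply: leq_trans (subset_leq_card (subsetIl _ _)) _; rewrite cards1.
  rewrite allJ; congr (_ * _).
  rewrite /phi0 /ubar big_map covS -prod_gaps; apply: eq_bigr => i _.
  by rewrite /Mv /= (restrictJ pP (subsetT _)) allJ.
rewrite negb_forall_in => /existsP [B /andP [BP]]; rewrite -ltnNge => B2.
rewrite lowsE big1 // => L /andP [LP /andP [low fL]]; move: LP; rewrite powersetE => LP.
rewrite /kappa /= (restrictJ pP (subsetT _)).
case: ifP => [allL|]; last by rewrite mul0r.
have BL : B \notin L.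
  apply/negP => BL; move/forall_inP: allL => /(_ B BP).
  have -> : B :&: cover L = B by apply/setIidPl/subsetP => x xB; apply/bigcupP; exists B.
  by rewrite leqNgt B2.
case: (L1 pP low BP BL) => i ile sB.
have gne : gap (cover L) i != set0.
  case/set0Pn: (partN0 pP BP) => x xB; apply/set0Pn; exists x; exact: subsetP sB _ xB.
have mem : restr P (gap (cover L) i) \in ubar P L.
  apply: map_f; rewrite mem_filter gne mem_iota /= add0n ltnS ile.
  done.
rewrite /phi0 (big_rem _ mem) /= /Mv /= (restrictJ pP (subsetT _)).
suff -> : [forall B0 in P, #|B0 :&: gap (cover L) i| <= 1]%N = false by rewrite !mul0r mulr0.
apply/negbTE; rewrite negb_forall_in; apply/existsP; exists B; rewrite BP /= -ltnNge.
by rewrite (setIidPl sB).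
Qed.

End Exps.

Section Final.
Variable R : comNzRingType.
Local Open Scope ring_scope.

Lemma uniq_exp (f : seq ncp -> R) (f0 : forall s, size s != 1%N -> f s = 0) phi1 phi2 :
  is_exp f phi1 -> is_exp f phi2 -> forall w, validw w -> phi1 w = phi2 w.
Proof.
move=> e1 e2.
suff H : forall N w, (sz w < N)%N -> validw w -> phi1 w = phi2 w by move=> w; apply: (H (sz w).+1).
elim=> [//|N IH] [|[n P] w] szw vw; first by rewrite e1 // e2 // !HS0.
have /= /andP [/andP [n0 ncP] vw'] := vw.
rewrite e1 // e2 // !(HS _ _ _ f0); congr (_ + _); apply: eq_bigr => L fL.
congr (_ * _); apply: IH; last first.
  by rewrite /validw all_cat; apply/andP; split; [exact: (proj1 (ubar_valid L ncP)) | exact: (proj1 (u0s_valid vw'))].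
rewrite sz_cat (proj2 (ubar_valid L ncP)) (proj2 (u0s_valid vw')).
move: szw; rewrite /sz /= -/(sz w) ltnS; apply: leq_trans; rewrite ltn_add2r.
apply: (cardC_lt (z := Ordinal n0)); by rewrite -(first_in_E _ (erefl : val (Ordinal n0) = 0%N)).
Qed.

Lemma psi_exp : is_exp (@einf R) (fun _ => 1).
Proof.
move=> [|[n P] w] vw; first by rewrite HS0 /eps eqxx addr0.
have /= /andP [/andP [n0 ncP] _] := vw.
rewrite (HS _ _ _ (@einf0 R)) /eps /= add0r.
under eq_bigr do rewrite mulr1.
by rewrite PSI.
Qed.

Variable k : nat -> R.

Lemma phi_exp : is_exp (kappa k) (phi0 k).
Proof.
move=> [|[n P] w] vw; first by rewrite HS0 /eps eqxx addr0 /phi0 big_nil.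
have /= /andP [/andP [n0 ncP] vw'] := vw.
rewrite (HS _ _ _ (kappa0 k)) /eps /= add0r.
rewrite {1}/phi0 big_cons -/(phi0 k w) (STAR k n0 ncP) mulr_suml.
apply: eq_bigr => L _; rewrite /phi0 big_cat /= -mulrA; congr (_ * (_ * _)); exact: (esym (phi0_u0s k vw')).
Qed.

End Final.

Section Sums.
Variable R : comNzRingType.
Variable k : nat -> R.
Local Open Scope ring_scope.

Definition Ssum n (P : {set {set 'I_n}}) : R :=
  \sum_(Q : {set {set 'I_n}} | isNCP Q && refines P Q) \prod_(tau in Q) Kchar k (restr P tau).

Lemma S0 n (P : {set {set 'I_n}}) B : isNCP P -> B \in P -> (1 < #|B|)%N -> Ssum P = 0.
Proof.
move=> /andP [pP _] BP B2; rewrite /Ssum big1 // => Q /andP [_ /forall_inP /(_ B BP) /exists_inP [C CQ BC]].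
rewrite (bigD1 C) //= /Kchar /kappa /= (restrictJ pP (subsetT _)).
suff -> : [forall B0 in P, #|B0 :&: C| <= 1]%N = false by rewrite mul0r.
apply/negbTE; rewrite negb_forall_in; apply/existsP; exists B; rewrite BP /= -ltnNge.
by rewrite (setIidPl BC).
Qed.

Lemma S1 n (P : {set {set 'I_n}}) : isNCP P -> [forall B in P, #|B| <= 1]%N -> Ssum P = mom k n.
Proof.
move=> /andP [pP _] /forall_inP allS; rewrite /Ssum /mom; apply: eq_big => Q.
  case nQ: (isNCP Q) => //=; apply/forall_inP => B BP.
  case/set0Pn: (partN0 pP BP) => x xB; have eB := set1_card xB (allS _ BP).
  have /andP [pQ _] := nQ.
  have xc : x \in cover Q by rewrite (partC pQ) inE.
  apply/exists_inP; exists (pblock Q x); first exact: pblock_mem.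
  by rewrite eB sub1set mem_pblock.
move=> _; rewrite /W; apply: eq_bigr => tau _; rewrite /Kchar /kappa /= (restrictJ pP (subsetT _)).
suff -> : [forall B0 in P, #|B0 :&: tau| <= 1]%N by [].
apply/forall_inP => B BP; apply: leq_trans (allS _ BP); exact: subset_leq_card (subsetIl _ _).
Qed.

Lemma exists_big n (P : {set {set 'I_n}}) : isNCP P -> ~~ [forall B in P, #|B| <= 1]%N ->
  exists2 B, B \in P & (1 < #|B|)%N.
Proof.
move=> _; rewrite negb_forall_in => /existsP [B /andP [BP]]; rewrite -ltnNge; by exists B.
Qed.

Lemma phi0_1 p : phi0 k [:: p] = Mv k p.
Proof. by rewrite /phi0 big_seq1. Qed.

Lemma phi0_nil : phi0 k [::] = 1.
Proof. by rewrite /phi0 big_nil. Qed.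

End Sums.

Theorem mainTheorem14 (R : fieldType) (k : nat -> R) :
  (exists phi : seq ncp -> R, is_exp (kappa k) phi) /\
  (exists psi : seq ncp -> R, is_exp (@einf R) psi) /\
  (forall phi psi : seq ncp -> R,
     is_exp (kappa k) phi -> is_exp (@einf R) psi ->
     forall (n : nat) (P : {set {set 'I_n}}), isNCP P ->
       [/\ phi (toH P) = coact psi (Kchar k) P,
           coact psi (Kchar k) P =
             (\sum_(Q : {set {set 'I_n}} | isNCP Q && refines P Q)
                \prod_(tau in Q) Kchar k (restr P tau))%R,
           (#|P| < n)%N ->
             (\sum_(Q : {set {set 'I_n}} | isNCP Q && refines P Q)
                \prod_(tau in Q) Kchar k (restr P tau))%R = 0%R
         & #|P| = n ->
             (\sum_(Q : {set {set 'I_n}} | isNCP Q && refines P Q)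
                \prod_(tau in Q) Kchar k (restr P tau))%R =
             (\sum_(Q : {set {set 'I_n}} | isNCP Q)
                \prod_(pi in Q) k #|pi|)%R]).
Proof.
split; first by exists (phi0 k); apply: phi_exp.
split; first by exists (fun _ => 1%R); apply: psi_exp.
move=> phi psi ephi epsi n P ncP.
have hphi := uniq_exp (kappa0 k) ephi (phi_exp k).
have hpsi := uniq_exp (@einf0 R) epsi (@psi_exp R).
have valH : forall Q : {set {set 'I_n}}, isNCP Q -> validw (toH Q).
  move=> Q nQ; rewrite /toH; case: ifP => // /negbT n0.
  by rewrite /validw /= andbT /ncp_ok /= lt0n n0.
have /andP [pP _] := ncP.
have ceq : coact psi (Kchar k) P = Ssum k P.
  rewrite /coact /Ssum; apply: eq_bigr => Q /andP [nQ _].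
  by rewrite hpsi ?valH // mul1r.
have card_big : (#|P| < n)%N -> ~~ [forall B in P, #|B| <= 1]%N.
  move=> lt; apply/negP => /forall_inP allS; move: lt; rewrite ltnNge; apply/negP/negPn.
  rewrite -{1}(card_ord n) -cardsT (card_partition pP) -sum1_card; exact: leq_sum.
have card_eq : #|P| = n -> [forall B in P, #|B| <= 1]%N.
  move=> e; apply/negPn/negP => /(exists_big ncP) [B BP B2].
  have := card_partition pP; rewrite cardsT card_ord -{1}e.
  rewrite -sum1_card (bigD1 B) //= [in X in _ = X](bigD1 B) //= => eq.
  have : (\sum_(i in P | i != B) 1 <= \sum_(i in P | i != B) #|i|)%N.
    apply: leq_sum => C /andP [CP _]; rewrite card_gt0; exact: partN0 pP CP.
  rewrite leqNgt; apply/negP; move: eq B2; set a := (\sum_(i in P | i != B) 1)%N.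
  set b := (\sum_(i in P | i != B) #|i|)%N => eq B2; rewrite -(ltn_add2l #|B|) -eq.
  by rewrite negbK ltn_add2r.
split.
- rewrite ceq; case: (posnP n) => [n0|n0].
    subst n; rewrite /toH /= hphi ?valH //; etransitivity; first exact: phi0_nil.
    rewrite S1 ?mom0 //.
    by apply/forall_inP => B _; rewrite (set_I0 B) cards0.
  rewrite hphi ?valH //.
  have -> : toH P = [:: mkncp P] by rewrite /toH (negbTE (lt0n_neq0 n0)).
  etransitivity; first exact: phi0_1.
  rewrite /Mv /= (R3 pP).
  case: ifP => [allS|/negbT /(exists_big ncP) [B BP B2]]; first by rewrite S1.
  by rewrite (S0 k ncP BP B2).
- etransitivity; first exact: ceq. reflexivity.
- move=> /card_big /(exists_big ncP) [B BP B2]; etransitivity; last exact: (S0 k ncP BP B2); reflexivity.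
- move=> /card_eq allS; etransitivity; first exact: (S1 k ncP allS); reflexivity.
Qed.
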